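(* For every $x\in X$ we have $p\in\omega_T(x)$, where $p=(v_{0,0},v_{1,0},v_{2,0},\ldots)$.
   Context: Paths and cycles: a graph is $G=(V,E)$ with $V$ finite and $E\subset V\times V$. A path is a finite sequence of vertices $(u_0,\dots,u_L)$ with $(u_j,u_{j+1})\in E$; its length is $|\cdot|=L$; a cycle is a path with $u_0=u_L$. For paths where one ends where the next starts, $+$ denotes concatenation and $a\,c$ means the cycle $c$ traversed $a$ times. Construction: $G_0=(V_0,E_0)$ with $V_0=\{v_{0,0}\}$, $E_0=\{e_{0,0}\}$, $e_{0,0}=(v_{0,0},v_{0,0})$. For $n\geq1$, $G_n=(V_n,E_n)$ consists of a vertex $v_{n,0}$, the loop $e_{n,0}=(v_{n,0},v_{n,0})$, and $n$ cycles $c_{n,1},\dots,c_{n,n}$, each starting and ending at $v_{n,0}$, whose vertices other than $v_{n,0}$ are pairwise distinct (within each cycle and across cycles); $V_n$ is the set of all these vertices and $E_n$ consists of $e_{n,0}$ and the edges of the cycles. The maps $\varphi_n\colon V_{n+1}\to V_n$ and the lengths of the cycles $c_{n+1,i}$ are defined together: $\varphi_n(v_{n+1,0})=v_{n,0}$, and for each $i$ a path $P_{n,i}$ in $G_n$ from $v_{n,0}$ to $v_{n,0}$ is given; $c_{n+1,i}$ has length $|P_{n,i}|$ and $\varphi_n$ maps its $j$-th vertex to the $j$-th vertex of $P_{n,i}$ (written $\varphi_n(c_{n+1,i})=P_{n,i}$). The paths are: $P_{0,1}=10\,e_{0,0}$; for $n\geq1$: $P_{n,i}=e_{n,0}+2c_{n,i}+2c_{n,i+1}+\dots+2c_{n,n}+e_{n,0}$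 for $2\leq i\leq n$; $P_{n,n+1}=(n+2)^2\big(\sum_{i=1}^n|c_{n,i}|\big)\,e_{n,0}$; and $P_{n,1}=(1\,e_{n,0}+2c_{n,1})+(2\,e_{n,0}+2c_{n,1})+\dots+(k_n\,e_{n,0}+2c_{n,1})+e_{n,0}+2c_{n,2}+\dots+2c_{n,n}+e_{n,0}$, where $k_n=2\big(1+\sum_{i=1}^n|c_{n,i}|\big)$. Let $X=\{x\in\prod_{n\geq0}V_n:\varphi_n(x_{n+1})=x_n\ \forall n\}$ with metric $d(x,y)=2^{-\min\{i:x_i\neq y_i\}}$ ($d(x,x)=0$); $X$ is a compact zero-dimensional metric space, and $T\colon X\to X$ defined by $T(x)=y$ iff $(x_n,y_n)\in E_n$ for all $n$ is a well-defined homeomorphism. Write $x_n$ for the $n$-th coordinate of $x$. $\omega_T(x)=\bigcap_{n\geq0}\overline{\{T^k(x):k\geq n\}}$. *)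

(* Defs.v *)
From mathcomp Require Import all_boot.
Set Implicit Arguments. Unset Strict Implicit. Unset Printing Implicit Defensive.

(* Vertices of every G_n are encoded as pairs of naturals:
   (0,0) is the hub v_{n,0}; (i,j) with 1 <= i <= n and 1 <= j < |c_{n,i}|
   is the j-th vertex of the cycle c_{n,i}. *)
Definition vtx := (nat * nat)%type.
Definition hub : vtx := (0, 0).

(* paths are nonempty vertex lists; concatenation p + q (last p = head q) *)
Definition pcat (p q : seq vtx) : seq vtx := p ++ behead q.
Definition pcats (ps : seq (seq vtx)) : seq vtx := foldr pcat [:: hub] ps.
Fixpoint rep (a : nat) (c : seq vtx) : seq vtx :=
  match a with 0 => [:: head hub c] | a'.+1 => pcat c (rep a' c) end.
(* a e_{n,0} : the loop traversed a times *)
Definition loopa (a : nat) : seq vtx := nseq a.+1 hub.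

(* the cycle c_{n,i} as vertex list, given the length function L i = |c_{n,i}| *)
Definition cyc (L : nat -> nat) (i : nat) : seq vtx :=
  hub :: rcons [seq (i, j) | j <- iota 1 (L i).-1] hub.

Definition pathgen (n : nat) (L : nat -> nat) (i : nat) : seq vtx :=
  if n == 0 then loopa 10 else
  let S := \sum_(1 <= j < n.+1) L j in
  let k := 2 * (1 + S) in
  if i == n.+1 then loopa ((n + 2) ^ 2 * S)
  else if i == 1 then
    pcats ([seq pcat (loopa m) (rep 2 (cyc L 1)) | m <- iota 1 k]
           ++ [:: loopa 1] ++ [seq rep 2 (cyc L j) | j <- iota 2 (n - 1)]
           ++ [:: loopa 1])
  else pcats ([:: loopa 1] ++ [seq rep 2 (cyc L j) | j <- iota i (n.+1 - i)]
              ++ [:: loopa 1]).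

Fixpoint clen (n : nat) : nat -> nat :=
  match n with
  | 0 => fun _ => 0
  | m.+1 => fun i => (size (pathgen m (clen m) i)).-1
  end.

Definition P (n i : nat) : seq vtx := pathgen n (clen n) i.
Definition c (n i : nat) : seq vtx := cyc (clen n) i.

Definition inV (n : nat) (v : vtx) : Prop :=
  v = hub \/ exists i j, [/\ 1 <= i <= n, 1 <= j < clen n i & v = (i, j)].

Definition edge (n : nat) (u v : vtx) : Prop :=
  (u = hub /\ v = hub) \/
  exists i j, [/\ 1 <= i <= n, j < clen n i,
                 nth hub (c n i) j = u & nth hub (c n i) j.+1 = v].

Definition phi (n : nat) (v : vtx) : vtx :=
  if v == hub then hub else nth hub (P n v.1) v.2.

Definition inX (x : nat -> vtx) : Prop :=
  (forall n, inV n (x n)) /\ (forall n, phi n (x n.+1) = x n).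

Definition Tstep (x y : nat -> vtx) : Prop := inX y /\ forall n, edge n (x n) (y n).

Fixpoint Titer (k : nat) (x y : nat -> vtx) : Prop :=
  match k with
  | 0 => y = x
  | k'.+1 => exists z, Titer k' x z /\ Tstep z y
  end.

(* d(x,y) < 2^{-m}  iff  x_i = y_i for all i <= m *)
Definition close (m : nat) (x y : nat -> vtx) : Prop := forall i, i <= m -> x i = y i.

(* q in omega_T(x) = intersection over N of closure {T^k x : k >= N} *)
Definition in_omega (x q : nat -> vtx) : Prop :=
  forall N m, exists k y, N <= k /\ Titer k x y /\ close m y q.

Definition pt : nat -> vtx := fun _ => hub.

(* Main.v *)
Require Import Defs.
From mathcomp Require Import all_boot zify.
Set Implicit Arguments. Unset Strict Implicit.

Lemma nth_cyc L i t : nth hub (cyc L i) t = if (0 < t < L i) then (i, t) else hub.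
Proof.
rewrite /cyc; case: t => [|t] //=.
rewrite nth_rcons size_map size_iota.
case: ltnP => H.
  rewrite (nth_map 0) ?size_iota // nth_iota // add1n.
  by rewrite (_ : t.+1 < L i = true) //; lia.
rewrite (_ : t.+1 < L i = false); last lia.
by case: eqP.
Qed.

Lemma neq_hub1 i j : 0 < i -> ((i, j) == hub) = false.
Proof. by case: i. Qed.
Lemma neq_hub2 i j : 0 < j -> ((i, j) == hub) = false.
Proof. by case: j => // j _; rewrite /hub xpair_eqE andbF. Qed.

Lemma loopa_shape a : 0 < a -> exists t, loopa a = hub :: hub :: t.
Proof. by case: a => // a _; eexists. Qed.

Lemma P_shape n i : 0 < i <= n.+1 -> exists t, P n i = hub :: hub :: t.
Proof.
elim: n i => [|m IH] i Hi.
  by rewrite /P /pathgen /=; eexists.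
rewrite /P /pathgen.
case: ifP => // _.
  apply: loopa_shape.
  have [t Ht] := IH 1 isT.
  rewrite muln_gt0 expn_gt0 addn_gt0 /= big_ltn // addn_gt0.
  by rewrite -/(P m 1) Ht.
case: ifP => _.
  rewrite (_ : 2 * (1 + \sum_(1 <= j < m.+2) clen m.+1 j) = (2 * \sum_(1 <= j < m.+2) clen m.+1 j).+1.+1); last lia.
  by eexists.
by eexists.
Qed.

Lemma clen_pos n j : 0 < j <= n -> 0 < clen n j.
Proof.
case: n => [|m] Hj; first lia.
change (clen m.+1 j) with (size (P m j)).-1.
have [|t ->] := @P_shape m j; [lia | by []].
Qed.

Fixpoint walk n (s : seq vtx) : Prop :=
  match s with
  | a :: s' => (match s' with b :: _ => edge n a b | [::] => True end) /\ walk n s'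
  | [::] => True
  end.

Lemma walk_nth n s : walk n s ->
  forall t, t.+1 < size s -> edge n (nth hub s t) (nth hub s t.+1).
Proof.
elim: s => [|a s IH] //.
case: s IH => [|b s] IH [He Hw] [|t] //= Ht.
exact: IH.
Qed.

Lemma walk_of_nth n s :
  (forall t, t.+1 < size s -> edge n (nth hub s t) (nth hub s t.+1)) -> walk n s.
Proof.
elim: s => [|a s IH] // H.
split.
  case: s IH H => [|b s] // IH H; exact: (H 0).
by apply: IH => t Ht; apply: (H t.+1).
Qed.

Lemma walk_cat n a p q : walk n (a :: p) -> walk n (last a p :: q) ->
  walk n ((a :: p) ++ q).
Proof.
elim: p a => [|b p IH] a /=; first by move=> _ H.
move=> [He Hw] H; split; first exact He.
exact: IH.
Qed.

Definition good n (s : seq vtx) :=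
  [/\ exists t, s = hub :: t, last hub s = hub & walk n s].

Lemma good_pcat n p q : good n p -> good n q -> good n (pcat p q).
Proof.
move=> [[p' ->] Lp Wp] [[q' ->] Lq Wq]; rewrite /pcat /=.
split.
- by exists (p' ++ q').
- by rewrite -cat_cons last_cat Lp.
- rewrite -cat_cons; apply: walk_cat => //; by move: Lp => /= ->.
Qed.

Lemma good_pcats n ps : (forall s, s \in ps -> good n s) -> good n (pcats ps).
Proof.
elim: ps => [|s ps IH] H /=.
  by split => //; exists [::].
apply: good_pcat; first by apply: H; rewrite mem_head.
by apply: IH => s' Hs'; apply: H; rewrite in_cons Hs' orbT.
Qed.

Lemma good_loopa n a : good n (loopa a).
Proof.
split.
- by exists (nseq a hub).
- by rewrite /loopa; elim: a => //.
- apply: walk_of_nth => t Ht; left.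
  by rewrite /loopa !nth_nseq; move: Ht; rewrite size_nseq => Ht; rewrite Ht ltnW.
Qed.

Lemma size_cyc L i : size (cyc L i) = (L i).-1.+2.
Proof. by rewrite /cyc /= size_rcons size_map size_iota. Qed.

Lemma good_cyc n j : 0 < j <= n -> good n (cyc (clen n) j).
Proof.
move=> Hj; have Hp := clen_pos Hj.
split.
- by eexists.
- by rewrite /cyc /= last_rcons.
- apply: walk_of_nth => t; rewrite size_cyc => Ht.
  right; exists j, t; split => //; lia.
Qed.

Lemma good_rep2 n s : good n s -> good n (rep 2 s).
Proof.
move=> Hs; have Hs' := Hs; case: Hs' => [[t Ht] _ _].
rewrite /=; apply: good_pcat => //; apply: good_pcat => //.
by rewrite Ht; split => //; exists [::].
Qed.

Lemma P_good n i : 0 < i <= n.+1 -> good n (P n i).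
Proof.
case: n => [|m] Hi.
  by rewrite /P /pathgen /=; apply: good_loopa.
rewrite /P /pathgen.
case: ifP => _; first exact: good_loopa.
case: ifP => Hi1.
  apply: good_pcats => s; rewrite !mem_cat => /or4P [/mapP [a _ ->]| | /mapP [j Hj ->] |].
  - apply: good_pcat; first exact: good_loopa.
    by apply: good_rep2; apply: good_cyc.
  - by rewrite mem_seq1 => /eqP ->; apply: good_loopa.
  - apply: good_rep2; apply: good_cyc; move: Hj; rewrite mem_iota; lia.
  - by rewrite mem_seq1 => /eqP ->; apply: good_loopa.
apply: good_pcats => s; rewrite !mem_cat => /or3P [| /mapP [j Hj ->] |].
- by rewrite mem_seq1 => /eqP ->; apply: good_loopa.
- apply: good_rep2; apply: good_cyc; move: Hj Hi1 Hi; rewrite mem_iota => H /eqP ? ?; lia.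
- by rewrite mem_seq1 => /eqP ->; apply: good_loopa.
Qed.

Lemma P_last n i : 0 < i <= n.+1 -> nth hub (P n i) (size (P n i)).-1 = hub.
Proof. by move=> Hi; have [_ L _] := P_good Hi; rewrite nth_last. Qed.

Lemma clenS n i : clen n.+1 i = (size (P n i)).-1.
Proof. by []. Qed.

Lemma phi_cyc n i t : 0 < i <= n.+1 -> t <= clen n.+1 i ->
  phi n (nth hub (c n.+1 i) t) = nth hub (P n i) t.
Proof.
move=> Hi Ht; rewrite /c nth_cyc.
case: ifP => H.
  by rewrite /phi neq_hub1 //; case/andP: Hi.
rewrite /phi eqxx.
have [u Hu] := P_shape Hi.
case: t H Ht => [|t] H Ht; first by rewrite Hu.
have -> : t.+1 = (size (P n i)).-1.
  move: H Ht; rewrite clenS /=; lia.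
by rewrite P_last.
Qed.

Lemma edge_det n i j v : edge n (i, j) v -> (i, j) <> hub ->
  v = nth hub (c n i) j.+1.
Proof.
case => [[Hu _]|[i' [j' [Hi' Hj' Hu Hv]]]] Hne; first by [].
move: Hu; rewrite /c nth_cyc; case: ifP => H.
  by case => <- <-; rewrite -Hv.
by move=> Heq; exfalso; apply: Hne; rewrite -Heq.
Qed.

Lemma edge_inV n u v : edge n u v -> inV n v.
Proof.
case => [[_ ->]|[i [j [Hi Hj _ <-]]]]; first by left.
rewrite /c nth_cyc; case: ifP => H; last by left.
by right; exists i, j.+1; split.
Qed.

Lemma edge_hub_phi n v : edge n.+1 hub v -> phi n v = hub.
Proof.
case => [[_ ->]|[i [j [Hi Hj Hu <-]]]]; first by rewrite /phi eqxx.
move: Hu; rewrite /c !nth_cyc; case: ifP => H1 Hu.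
  by case: Hu => Hi0 _; move: Hi; rewrite Hi0.
have j0 : j = 0 by move: H1 Hj; case: j => //= j; lia.
subst j; case: ifP => H2; last by rewrite /phi eqxx.
rewrite /phi neq_hub1 /=; last by case/andP: Hi.
by have [u ->] := @P_shape n i Hi.
Qed.

Definition succ n (v : vtx) := nth hub (c n v.1) v.2.+1.
Arguments succ : simpl never.
Lemma succE n i j : succ n (i, j) = nth hub (c n i) j.+1.
Proof. by []. Qed.

Definition Tnext (y : nat -> vtx) (n : nat) : vtx :=
  if y n.+1 == hub then hub else phi n (succ n.+1 (y n.+1)).

Lemma Tnext_edge y n : inX y -> edge n (y n) (Tnext y n) /\ inV n (Tnext y n).
Proof.
move=> [HV Hphi]; rewrite /Tnext.
case: (HV n.+1) => [Hh | [i [j [Hi Hj Hy]]]].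
  rewrite Hh eqxx -(Hphi n) Hh /phi eqxx.
  by split; [left | left].
rewrite Hy neq_hub1; last by case/andP: Hi.
rewrite -(Hphi n) Hy succE phi_cyc //; last by case/andP: Hj.
have He : edge n (phi n (i, j)) (nth hub (P n i) j.+1).
  rewrite /phi neq_hub1 /=; last by case/andP: Hi.
  have [_ _ W] := P_good Hi.
  apply: walk_nth => //.
  have [u Hu] := P_shape Hi.
  move: Hj; rewrite clenS Hu /=; lia.
by split => //; apply: edge_inV He.
Qed.

Lemma Tnext_phi y n : inX y -> phi n (Tnext y n.+1) = Tnext y n.
Proof.
move=> Hy; have [HV Hphi] := Hy.
have He := (Tnext_edge n.+1 Hy).1.
rewrite /Tnext in He *.
case: (HV n.+2) => [Hh | [i2 [j2 [Hi2 Hj2 Hy2]]]].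
  have Hh1 : y n.+1 = hub by rewrite -(Hphi n.+1) Hh /phi eqxx.
  by rewrite Hh Hh1 eqxx /phi eqxx.
rewrite Hy2 neq_hub1 in He *; last by case/andP: Hi2.
case: (HV n.+1) => [Hh1 | [i [j [Hi Hj Hy1]]]].
  by rewrite Hh1 eqxx; rewrite Hh1 in He; apply: edge_hub_phi.
rewrite Hy1 in He; rewrite (edge_det He); last by rewrite /hub => [[]] E; move: Hi; rewrite E.
by rewrite Hy1 neq_hub1 //; case/andP: Hi.
Qed.

Lemma T_exists y : inX y -> exists z, Tstep y z.
Proof.
move=> Hy; exists (Tnext y); split; last by move=> n; exact: (Tnext_edge n Hy).1.
split => n; [exact: (Tnext_edge n Hy).2 | exact: Tnext_phi].
Qed.

Lemma Titer_inX x k y : inX x -> Titer k x y -> inX y.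
Proof. by case: k => [|k] /= Hx; [move=> -> | case=> z [_ [H _]]]. Qed.

Lemma orbit x : inX x -> forall k, exists y, Titer k x y.
Proof.
move=> Hx; elim => [|k [y Hy]]; first by exists x.
have [z Hz] := T_exists (Titer_inX Hx Hy).
by exists z, y.
Qed.

Lemma hub_down y m : inX y -> y m = hub -> close m y pt.
Proof.
move=> [_ Hphi] Hm i Him; rewrite /pt.
have H : forall d, y (m - d) = hub.
  elim => [|d IH]; first by rewrite subn0.
  case: (ltnP d m) => H.
    have E : m - d = (m - d.+1).+1 by lia.
    by rewrite -(Hphi (m - d.+1)) -E IH /phi eqxx.
  by have -> : m - d.+1 = m - d by lia.
by move: (H (m - i)); rewrite subKn.
Qed.

Definition mu m (v : vtx) := if v == hub then 0 else clen m v.1 - v.2.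

Lemma reach x m : inX x -> forall d k y, Titer k x y -> mu m (y m) < d ->
  exists k' y', k <= k' /\ Titer k' x y' /\ y' m = hub.
Proof.
move=> Hx; elim => [|d IH] k y Hk Hmu; first by [].
case: (eqVneq (y m) hub) => Hh; first by exists k, y.
have Hy := Titer_inX Hx Hk.
have [z Hz] := T_exists Hy.
have Hkz : Titer k.+1 x z by exists y.
case: Hy => [HV _].
case: (HV m) => [Hh'|[i [j [Hi Hj Hym]]]]; first by rewrite Hh' eqxx in Hh.
have He := Hz.2 m; rewrite Hym in He.
have Hne : (i, j) <> hub.
  by move=> E; move: (neq_hub1 j (proj1 (andP Hi))); rewrite E eqxx.
have Hz' := edge_det He Hne.
rewrite /c nth_cyc in Hz'.
case: (eqVneq (z m) hub) => Hzh.
  by exists k.+1, z; split.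
move: Hz' Hzh Hmu; case: ifP => Hc Hzm; rewrite Hzm => Hzh Hmu; last by rewrite eqxx in Hzh.
have [|k' [y' [H1 [H2 H3]]]] := IH k.+1 z Hkz.
  move: Hmu; rewrite /mu Hym Hzm !neq_hub1 /=; try by case/andP: Hi.
  lia.
by exists k', y'; split => //; apply: ltnW.
Qed.

Theorem lemma3p3 (x : nat -> vtx) (hx : inX x) : in_omega x pt.
Proof.
move=> N m.
have [y0 H0] := orbit hx N.
have [k' [y' [H1 [H2 H3]]]] := @reach x m hx _ _ _ H0 (ltnSn _).
exists k', y'; split => //; split => //.
exact: hub_down (Titer_inX hx H2) H3.
Qed.
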